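(* Let $f\in C^2(\mathbb{R}^d)$ with $\nabla f$ globally $L$-Lipschitz, $h>0$, $\beta\ge0$, $c\le\gamma_k\le C$ ($0<c\le C$), and assume $\beta+\frac h2<\frac cL$. Let $(x_k)$ be generated by $y_k=x_k+\alpha_k(x_k-x_{k-1})-\beta_k(\nabla f(x_k)-\nabla f(x_{k-1}))$, $x_{k+1}=y_k-s_k\nabla f(x_k)$ ($k\ge1$), with $\alpha_k=\frac1{1+\gamma_kh}$, $\beta_k=\beta h\alpha_k$, $s_k=h^2\alpha_k$. Let $v_k=x_k-x_{k-1}$, $C_1=\frac1{h^2}+\frac{\beta L}h$ and $V_k=f(x_k)+\frac{C_1}2\|v_k\|^2$. Then for every $k\ge1$, $$V_{k+1}\le V_k-\delta\|v_{k+1}\|^2,\qquad \delta=\frac ch-\frac L2-\frac{\beta L}h>0.$$ *)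

(* Defs.v *)
From HB Require Import structures.
From mathcomp Require Import all_boot all_order all_algebra.
From mathcomp Require Import all_classical all_reals all_analysis.
Set Implicit Arguments. Unset Strict Implicit. Unset Printing Implicit Defensive.
Import Order.TTheory GRing.Theory Num.Theory.
Import numFieldNormedType.Exports.
Local Open Scope ring_scope.

Definition evec {R : realType} {d : nat} (i : 'I_d) : 'rV[R]_d := delta_mx 0 i.

Definition dotp {R : realType} {d : nat} (u v : 'rV[R]_d) : R :=
  \sum_(i < d) u 0 i * v 0 i.
Definition enorm {R : realType} {d : nat} (v : 'rV[R]_d) : R :=
  Num.sqrt (dotp v v).

Definition partial {R : realType} {d : nat} (i : 'I_d) (f : 'rV[R]_d -> R)
  : 'rV[R]_d -> R := fun x => 'D_(evec i) f x.

Definition grad {R : realType} {d : nat} (f : 'rV[R]_d -> R) (x : 'rV[R]_d)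
  : 'rV[R]_d := \row_(i < d) partial i f x.

Definition C2 {R : realType} {d : nat} (f : 'rV[R]_d -> R) : Prop :=
  continuous f /\
  (forall i x, derivable f x (evec i)) /\
  (forall i, continuous (partial i f)) /\
  (forall i j x, derivable (partial i f) x (evec j)) /\
  (forall i j, continuous (partial j (partial i f))).

Definition lipschitz_e {R : realType} {d : nat} (L : R) (g : 'rV[R]_d -> 'rV[R]_d)
  : Prop := forall x y, enorm (g x - g y) <= L * enorm (x - y).

(* Main.v *)
Require Import Defs.
From HB Require Import structures.
From mathcomp Require Import all_boot all_order all_algebra.
From mathcomp Require Import all_classical all_reals all_analysis.
From mathcomp Require Import ring lra.
Import Order.TTheory GRing.Theory Num.Theory.
Import numFieldNormedType.Exports.
Local Open Scope ring_scope.
Local Open Scope classical_set_scope.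

Section T.
Context {R : realType} {d : nat}.
Implicit Types u v w : 'rV[R]_d.
Definition n2 v := dotp v v.

Lemma dotpC u v : dotp u v = dotp v u.
Proof. by apply: eq_bigr => i _; rewrite mulrC. Qed.
Lemma dotpDl u v w : dotp (u + v) w = dotp u w + dotp v w.
Proof. by rewrite /dotp -big_split; apply: eq_bigr => i _; rewrite !mxE mulrDl. Qed.
Lemma dotpZl a u w : dotp (a *: u) w = a * dotp u w.
Proof. by rewrite /dotp mulr_sumr; apply: eq_bigr => i _; rewrite !mxE mulrA. Qed.
Lemma dotpNl u w : dotp (- u) w = - dotp u w.
Proof. by rewrite -scaleN1r dotpZl mulN1r. Qed.
Lemma dotpBl u v w : dotp (u - v) w = dotp u w - dotp v w.
Proof. by rewrite dotpDl dotpNl. Qed.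
Lemma n2_ge0 v : 0 <= n2 v.
Proof. by apply: sumr_ge0 => i _; rewrite -expr2 sqr_ge0. Qed.
Lemma enorm_ge0 v : 0 <= enorm v.
Proof. exact: sqrtr_ge0. Qed.
Lemma enorm_sq v : enorm v ^+ 2 = n2 v.
Proof. by rewrite sqr_sqrtr // n2_ge0. Qed.
Lemma young u v (l : R) : 0 < l -> 2 * dotp u v <= l * n2 u + n2 v / l.
Proof.
move=> l0; rewrite /n2 /dotp mulr_sumr mulr_sumr mulr_suml -big_split /=.
apply: ler_sum => i _.
have H : 0 <= (l * u 0 i - v 0 i) ^+ 2 / l by rewrite divr_ge0 ?sqr_ge0 ?ltW.
have E : (l * u 0 i - v 0 i) ^+ 2 / l = l * (u 0 i * u 0 i) + v 0 i * v 0 i / l - 2 * (u 0 i * v 0 i).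
  by field; rewrite gt_eqF.
by rewrite E subr_ge0 in H.
Qed.
Lemma n2_eq0 v : n2 v = 0 -> v = 0.
Proof.
move=> /eqP; rewrite /n2 /dotp psumr_eq0; last by move=> i _; rewrite -expr2 sqr_ge0.
move=> /allP H; apply/rowP => j; rewrite mxE.
have := H j (mem_index_enum _); rewrite -expr2 sqrf_eq0 => /eqP. by [].
Qed.
Lemma dotp0l v : dotp 0 v = 0.
Proof. by apply: big1 => i _; rewrite mxE mul0r. Qed.
Lemma enorm_eq0 v : enorm v = 0 -> v = 0.
Proof. by move=> /eqP; rewrite sqrtr_eq0 => H; apply: n2_eq0; apply/eqP; rewrite eq_le H n2_ge0. Qed.
Lemma cauchy_schwarz u v : dotp u v <= enorm u * enorm v.
Proof.
have [/enorm_eq0 ->|nu] := eqVneq (enorm u) 0; first by rewrite dotp0l mulr_ge0 ?enorm_ge0.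
have [/enorm_eq0 ->|nv] := eqVneq (enorm v) 0; first by rewrite dotpC dotp0l mulr_ge0 ?enorm_ge0.
have pu : 0 < enorm u by rewrite lt_def nu enorm_ge0.
have pv : 0 < enorm v by rewrite lt_def nv enorm_ge0.
have := young u v _ (divr_gt0 pv pu); rewrite -!enorm_sq.
have -> : enorm v / enorm u * enorm u ^+ 2 + enorm v ^+ 2 / (enorm v / enorm u) = 2 * (enorm u * enorm v).
  by field; rewrite nu nv.
by move=> H; rewrite -(@ler_pM2l _ 2) //.
Qed.
Lemma n2Z a v : n2 (a *: v) = a ^+ 2 * n2 v.
Proof. by rewrite /n2 dotpZl dotpC dotpZl mulrA expr2. Qed.
Lemma enormZ a v : enorm (a *: v) = `|a| * enorm v.
Proof. by rewrite /enorm -/(n2 _) n2Z sqrtrM ?sqr_ge0 // sqrtr_sqr. Qed.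
Lemma coord_le v i : `|v 0 i| <= enorm v.
Proof.
rewrite -(sqrtr_sqr (v 0 i)) ler_sqrt ?n2_ge0 //.
rewrite /dotp (bigD1 i) //= -expr2 lerDl; apply: sumr_ge0 => j _; by rewrite -expr2 sqr_ge0.
Qed.
Lemma n2N v : n2 (- v) = n2 v.
Proof. by rewrite -scaleN1r n2Z sqrrN expr1n mul1r. Qed.
Lemma n2_mono u v : (forall i, u 0 i ^+ 2 <= v 0 i ^+ 2) -> enorm u <= enorm v.
Proof. move=> H; rewrite ler_sqrt ?n2_ge0 //; apply: ler_sum => i _; rewrite -!expr2; exact: H. Qed.
Lemma line_mvt (f : 'rV[R]_d -> R) (q e : 'rV[R]_d) (s : R) :
  (forall t : R, derivable f (q + t *: e) e) ->
  exists r : R, `|r| <= `|s| /\ f (q + s *: e) - f q = s * derive f (q + r *: e) e.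
Proof.
move=> hder.
pose phi := fun t : R => f (q + t *: e).
have D (t : R) : is_derive t (1 : R) phi (derive f (q + t *: e) e).
  have E : (fun h : R => h^-1 *: ((phi \o shift t) (h *: 1) - phi t)) =
           (fun h : R => h^-1 *: ((f \o shift (q + t *: e)) (h *: e) - f (q + t *: e))).
    apply: funext => h /=; rewrite /phi [h%:A]mulr1 scalerDl.
    by rewrite addrCA addrA.
  apply: DeriveDef; first by rewrite /derivable E; exact: hder.
  by rewrite /derive E.
have cont (a b : R) : {within `[a, b], continuous phi}.
  by apply: derivable_within_continuous => x _; case: (D x).
have phi0 : phi 0 = f q by rewrite /phi scale0r addr0.
have [s0|s0] := leP 0 s.
  have [c] := MVT_segment s0 (fun x _ => D x) (cont 0 s).
  rewrite in_itv /= => /andP[c0 cs] H; exists c; split.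
    by rewrite !ger0_norm // (le_trans c0 cs).
  by rewrite -phi0 H subr0 mulrC.
have [c] := MVT_segment (ltW s0) (fun x _ => D x) (cont s 0).
rewrite in_itv /= => /andP[sc c0] H; exists c; split.
  by rewrite !ler0_norm ?lerN2 // ?(ltW s0) // (le_trans sc c0).
move: H; rewrite phi0 /phi => H; lra.
Qed.
Definition prow (w : 'rV[R]_d) (m : nat) : 'rV[R]_d :=
  \row_j (if (j < m)%N then w 0 j else 0).
Lemma prow0 w : prow w 0 = 0.
Proof. by apply/rowP => j; rewrite !mxE ltn0. Qed.
Lemma prowd w : prow w d = w.
Proof. by apply/rowP => j; rewrite !mxE ltn_ord. Qed.
Lemma prowS w (i : 'I_d) : prow w i.+1 = prow w i + w 0 i *: evec i.
Proof.
apply/rowP => j; rewrite !mxE ltnS leq_eqVlt eqxx /=.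
have [->|ne] := eqVneq j i; first by rewrite eqxx ltnn /= mulr1 add0r.
have -> : (nat_of_ord j == nat_of_ord i) = false by exact: negbTE ne.
by rewrite /= mulr0 addr0.
Qed.
Lemma quadQ (f : 'rV[R]_d -> R) (L : R) :
  (forall i x, derivable f x (evec i)) -> lipschitz_e L (grad f) -> 0 <= L ->
  forall z w, f (z + w) - f z - dotp (grad f z) w <= d%:R * L * n2 w.
Proof.
move=> hd hL L0 z w.
pose p m := z + prow w m.
have tel : f (z + w) - f z = \sum_(i < d) (f (p i.+1) - f (p i)).
  rewrite -(big_mkord xpredT (fun i => f (p i.+1) - f (p i))) telescope_sumr //.
  by rewrite /p prowd prow0 addr0.
have -> : d%:R * L * n2 w = \sum_(i < d) (L * n2 w) by rewrite sumr_const card_ord -mulrA mulr_natl.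
rewrite tel /dotp -sumrB; apply: ler_sum => i _.
have [r [hr E]] := line_mvt f (p i) (evec i) (w 0 i) (fun t => hd i _).
rewrite /p prowS addrA E mxE /partial [_ * w 0 i]mulrC -mulrBr.
set q := z + prow w i + r *: evec i.
have Hqz : enorm (q - z) <= enorm w.
  have -> : q - z = prow w i + r *: evec i.
  by rewrite /q addrAC [z + _ - _]addrAC subrr add0r.
  apply: n2_mono => j; rewrite !mxE.
  have [->|ne] := eqVneq j i.
    rewrite ltnn eqxx mulr1 add0r -(real_normK (num_real r)) -(real_normK (num_real (w 0 i))) !expr2.
    by apply: ler_pM; rewrite ?normr_ge0.
  rewrite andbF.
  rewrite mulr0 addr0.
  case: (j < i)%N => //; by rewrite expr0n /= sqr_ge0.
have Hg : `|derive f q (evec i) - derive f z (evec i)| <= L * enorm w.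
  have := coord_le (grad f q - grad f z) i; rewrite !mxE /partial => H.
  apply: (le_trans H); apply: (le_trans (hL q z)); exact: ler_wpM2l.
apply: (le_trans (ler_norm _)); rewrite normrM.
apply: (@le_trans _ _ (enorm w * (L * enorm w))).
  apply: ler_pM; [exact: normr_ge0|exact: normr_ge0|exact: coord_le|exact: Hg].
by rewrite mulrCA -expr2 enorm_sq.
Qed.
Lemma sum_nat_R (N : nat) : \sum_(j < N) (j%:R : R) = N%:R * (N%:R - 1) / 2.
Proof.
elim: N => [|N IH]; first by rewrite big_ord0 mul0r mul0r.
rewrite big_ord_recr /= IH -addn1 natrD; by field.
Qed.

Lemma descent_N (f : 'rV[R]_d -> R) (L : R) :
  (forall i x, derivable f x (evec i)) -> lipschitz_e L (grad f) -> 0 <= L ->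
  forall x u (N : nat), (0 < N)%N ->
  f (x + u) - f x - dotp (grad f x) u <= L / 2 * n2 u + d%:R * L * n2 u / N%:R.
Proof.
move=> hd hL L0 x u N N0.
have Nr : 0 < (N%:R : R) by rewrite ltr0n.
pose t (j : nat) : R := j%:R / N%:R.
pose z j := x + t j *: u.
have tel : f (x + u) - f x = \sum_(j < N) (f (z j.+1) - f (z j)).
  rewrite -(big_mkord xpredT (fun j => f (z j.+1) - f (z j))) telescope_sumr //.
  by rewrite /z /t mul0r scale0r addr0 divff ?gt_eqF // scale1r.
have zS j : z j.+1 = z j + N%:R^-1 *: u.
  rewrite /z /t -addrA -scalerDl -[j.+1]addn1 natrD; congr (_ + _ *: _); by field; rewrite ?gt_eqF.
have term j : (j < N)%N -> f (z j.+1) - f (z j) <=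
    N%:R^-1 * dotp (grad f x) u + N%:R^-1 * (L * t j * n2 u) + d%:R * L * (N%:R^-1 ^+ 2 * n2 u).
  move=> jN; rewrite zS.
  have Q := quadQ f L hd hL L0 (z j) (N%:R^-1 *: u).
  rewrite n2Z in Q.
  have D : dotp (grad f (z j)) (N%:R^-1 *: u) = N%:R^-1 * dotp (grad f x) u + N%:R^-1 * dotp (grad f (z j) - grad f x) u.
    rewrite dotpC dotpZl dotpBl dotpC; ring.
  have C : dotp (grad f (z j) - grad f x) u <= L * t j * n2 u.
    apply: (le_trans (cauchy_schwarz _ _)).
    have tj : 0 <= t j by rewrite divr_ge0 // ler0n.
    have -> : L * t j * n2 u = (L * enorm (z j - x)) * enorm u.
      by rewrite /z addrAC subrr add0r enormZ ger0_norm // -enorm_sq expr2; ring.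
    by apply: ler_wpM2r; [exact: enorm_ge0|exact: hL].
  have Ni : 0 <= N%:R^-1 :> R by rewrite invr_ge0 ltW.
  have C' := ler_wpM2l Ni C.
  lra.
have S : \sum_(j < N) (f (z j.+1) - f (z j)) <= \sum_(j < N) (N%:R^-1 * dotp (grad f x) u + N%:R^-1 * (L * t j * n2 u) + d%:R * L * (N%:R^-1 ^+ 2 * n2 u)).
  by apply: ler_sum => j _; exact: term.
rewrite -tel !big_split /= !sumr_const card_ord -mulr_sumr -mulr_suml -mulr_sumr in S.
have St : \sum_(i < N) t i = (N%:R - 1) / 2.
  rewrite /t -mulr_suml sum_nat_R; by field; rewrite ?gt_eqF.
rewrite St in S.
have U0 := n2_ge0 u.
have E1 : (N%:R^-1 * dotp (grad f x) u) *+ N = dotp (grad f x) u by rewrite -mulr_natl; field; rewrite gt_eqF.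
have E2 : (d%:R * L * (N%:R^-1 ^+ 2 * n2 u)) *+ N = d%:R * L * n2 u / N%:R by rewrite -mulr_natl; field; rewrite gt_eqF.
have E3 : N%:R^-1 * (L * ((N%:R - 1) / 2) * n2 u) <= L / 2 * n2 u.
  have -> : N%:R^-1 * (L * ((N%:R - 1) / 2) * n2 u) = L / 2 * n2 u - L / 2 * n2 u / N%:R by field; rewrite gt_eqF.
  rewrite lerBlDr lerDl; apply: divr_ge0; [apply: mulr_ge0 => //; exact: divr_ge0|exact: ltW].
rewrite E1 E2 in S; lra.
Qed.
Lemma descent (f : 'rV[R]_d -> R) (L : R) :
  (forall i x, derivable f x (evec i)) -> lipschitz_e L (grad f) -> 0 <= L ->
  forall x u, f (x + u) <= f x + dotp (grad f x) u + L / 2 * n2 u.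
Proof.
move=> hd hL L0 x u.
rewrite -subr_ge0 -[X in 0 <= X]opprK oppr_ge0 !opprD !opprK.
set A := f (x + u) - f x - dotp (grad f x) u.
have -> : - f x - dotp (grad f x) u - L / 2 * n2 u + f (x + u) = A - L / 2 * n2 u by rewrite /A; ring.
rewrite subr_le0; apply/ler_addgt0Pr => e e0.
set K := d%:R * L * n2 u.
have K0 : 0 <= K by rewrite mulr_ge0 ?n2_ge0 // mulr_ge0 // ler0n.
pose N := (Num.trunc (K / e)).+1.
have NK : K / e < N%:R by exact: truncnS_gt.
have Np : 0 < (N%:R : R) by rewrite ltr0n.
have H := descent_N f L hd hL L0 x u N (ltn0Sn (Num.trunc (K / e))).
rewrite -/A -/K -/N in H; apply: (le_trans H); rewrite lerD2l.
rewrite ler_pdivrMr // mulrC -ler_pdivrMr //; exact: ltW.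
Qed.
End T.

Lemma scalar_step (R : realFieldType) (h b L g c P Q1 Q2 U W Fa Fn : R) :
 0 < h -> 0 <= b -> 0 < L -> c <= g -> 0 <= W -> 0 <= U ->
 (1 + g * h) * W = Q1 - b * h * Q2 - h ^+ 2 * P ->
 2 * Q1 <= U + W -> - (2 * Q2) <= L * U + L * W ->
 Fn <= Fa + P + L / 2 * W ->
 Fn + (1 / h ^+ 2 + b * L / h) / 2 * W <= Fa + (1 / h ^+ 2 + b * L / h) / 2 * U - (c / h - L / 2 - b * L / h) * W.
Proof.
move=> h0 b0 L0 cg W0 U0 E Y1 Y2 D.
have h2 : 0 < h ^+ 2 by rewrite exprn_gt0.
rewrite -(ler_pM2l h2).
have -> : h ^+ 2 * (Fn + (1 / h ^+ 2 + b * L / h) / 2 * W) = h ^+ 2 * Fn + (1 + b * L * h) / 2 * W.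
  by field; rewrite gt_eqF.
have -> : h ^+ 2 * (Fa + (1 / h ^+ 2 + b * L / h) / 2 * U - (c / h - L / 2 - b * L / h) * W)
   = h ^+ 2 * Fa + (1 + b * L * h) / 2 * U - (c * h - h ^+ 2 * L / 2 - b * L * h) * W.
  by field; rewrite gt_eqF.
have D' : h ^+ 2 * Fn <= h ^+ 2 * (Fa + P + L / 2 * W) by rewrite ler_pM2l.
have Y2' : b * h * (- (2 * Q2)) <= b * h * (L * U + L * W) by rewrite ler_wpM2l // mulr_ge0 // ltW.
have G : 0 <= (g - c) * h * W by rewrite !mulr_ge0 ?subr_ge0 // ltW.
nra.
Qed.

Theorem mainTheorem7 (R : realType) (d : nat) (f : 'rV[R]_d -> R) (L h beta c C : R)
  (gamma : nat -> R) (x : nat -> 'rV[R]_d) :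
  C2 f -> 0 < L -> lipschitz_e L (grad f) ->
  0 < h -> 0 <= beta -> 0 < c -> c <= C ->
  (forall k, (1 <= k)%N -> c <= gamma k <= C) ->
  beta + h / 2 < c / L ->
  (forall k, (1 <= k)%N ->
     let alpha := 1 / (1 + gamma k * h) in
     let betak := beta * h * alpha in
     let sk := h ^+ 2 * alpha in
     let y := x k + alpha *: (x k - x k.-1)
              - betak *: (grad f (x k) - grad f (x k.-1)) in
     x k.+1 = y - sk *: grad f (x k)) ->
  let v := fun k => x k - x k.-1 in
  let C1 := 1 / h ^+ 2 + beta * L / h in
  let V := fun k => f (x k) + C1 / 2 * enorm (v k) ^+ 2 in
  let delta := c / h - L / 2 - beta * L / h in
  0 < delta /\
  (forall k, (1 <= k)%N -> V k.+1 <= V k - delta * enorm (v k.+1) ^+ 2).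
Proof.
move=> hC2 L0 hL h0 b0 c0 cC hg hb hx v C1 V delta.
have hd : forall i x0, derivable f x0 (evec i) by case: hC2 => _ [].
have Lb : (beta + h / 2) * L < c by rewrite -ltr_pdivlMr.
split.
  rewrite /delta.
  have -> : c / h - L / 2 - beta * L / h = (c - (beta + h / 2) * L) / h by field; rewrite gt_eqF.
  by rewrite divr_gt0 // subr_gt0.
move=> k hk.
case/andP: (hg k hk) => gc _.
move: (hx k hk) => /= E.
rewrite /V /v /= /C1 /delta.
set a := x k in E *; set b := x k.-1 in E *; set xn := x k.+1 in E *.
set G := grad f a in E *; set G' := grad f b in E *; set g := gamma k in E gc *.
have s0 : 0 < 1 + g * h by rewrite addr_gt0 // mulr_gt0 // (lt_le_trans c0 gc).
have Ew : xn - a = (1 / (1 + g * h)) *: ((a - b) - (beta * h) *: (G - G') - h ^+ 2 *: G).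
  by rewrite E; apply/rowP => j; rewrite !mxE; ring.
have EW : (1 + g * h) * n2 (xn - a) = dotp (a - b) (xn - a) - beta * h * dotp (G - G') (xn - a) - h ^+ 2 * dotp G (xn - a).
  rewrite /n2 {1}Ew !(dotpZl, dotpBl); field; by rewrite gt_eqF.
have Dn := descent f L hd hL (ltW L0) a (xn - a).
rewrite addrCA subrr addr0 -/G in Dn.
have Y1 := young (a - b) (xn - a) 1 ltr01.
rewrite mul1r divr1 in Y1.
have LD : n2 (G - G') <= L ^+ 2 * n2 (a - b).
  rewrite -!enorm_sq -exprMn !expr2; apply: ler_pM; rewrite ?enorm_ge0 //; exact: hL.
have Li : 0 < L^-1 by rewrite invr_gt0.
have Y2 := young (- (G - G')) (xn - a) L^-1 Li.
rewrite dotpNl n2N invrK in Y2.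
have Y2' : - (2 * dotp (G - G') (xn - a)) <= L * n2 (a - b) + L * n2 (xn - a).
  have := ler_wpM2l (ltW Li) LD.
  have -> : L^-1 * (L ^+ 2 * n2 (a - b)) = L * n2 (a - b) by field; rewrite gt_eqF.
  move=> H; lra.
rewrite !enorm_sq.
exact: scalar_step h0 b0 L0 gc (n2_ge0 _) (n2_ge0 _) EW Y1 Y2' Dn.
Qed.
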